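(* Let $r\ge 1$ and $t\ge 3$ be integers and $n=r(t-1)+2$. Then $q(K_1\nabla L_{r,t-1})<n+2t-3$.
   Context: All graphs are finite and simple. $q(G)$ denotes the largest eigenvalue of the signless Laplacian matrix $Q(G)=D(G)+A(G)$ of $G$. For graphs $G,H$ on disjoint vertex sets, $G\nabla H$ is their join (all edges between $V(G)$ and $V(H)$ added), and $rK_s$ denotes the disjoint union of $r$ copies of $K_s$. $L_{r,s}=K_1\nabla rK_s$, i.e. $r$ copies of $K_{s+1}$ sharing exactly one common vertex. Thus $K_1\nabla L_{r,t-1}$ has $r(t-1)+2=n$ vertices. *)

(* Defs.v *)
From HB Require Import structures.
From mathcomp Require Import all_boot all_order all_algebra.
From mathcomp Require Import polyrcf.
Set Implicit Arguments. Unset Strict Implicit. Unset Printing Implicit Defensive.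
Import Order.TTheory GRing.Theory Num.Theory.
Local Open Scope ring_scope.

(* A finite simple graph is a symmetric irreflexive relation on a finType. *)

Definition gjoin (T1 T2 : finType) (e1 : rel T1) (e2 : rel T2) : rel (T1 + T2) :=
  fun x y => match x, y with
             | inl a, inl b => e1 a b
             | inr a, inr b => e2 a b
             | _, _ => true
             end.

Definition complete_graph (T : finType) : rel T := fun x y => x != y.
Definition K1 : rel unit := fun x y => x != y.

(* r K_s : r disjoint copies of K_s, on vertex set 'I_r * 'I_s. *)
Definition rK (r s : nat) : rel ('I_r * 'I_s) :=
  fun x y => (x.1 == y.1) && (x.2 != y.2).
Arguments rK r s : clear implicits.

Definition L_graph (r s : nat) := gjoin K1 (rK r s).
Arguments L_graph r s : clear implicits.

Definition adjmx (R : nzRingType) (T : finType) (e : rel T) : 'M[R]_#|T| :=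
  \matrix_(i, j) (e (enum_val i) (enum_val j))%:R.

Definition degmx (R : nzRingType) (T : finType) (e : rel T) : 'M[R]_#|T| :=
  diag_mx (\row_i \sum_j adjmx R e i j).
Definition signless_laplacian (R : nzRingType) (T : finType) (e : rel T) :=
  degmx R e + adjmx R e.

(* q(G): the largest eigenvalue of Q(G), i.e. the largest (real) root of its
   characteristic polynomial (rootsR lists the roots in increasing order;
   Q is real symmetric so all its eigenvalues are real). *)
Definition q_index (R : rcfType) (T : finType) (e : rel T) : R :=
  last 0 (rootsR (char_poly (signless_laplacian R e))).

(* Main.v *)
Require Import Defs.
From HB Require Import structures.
From mathcomp Require Import all_boot all_order all_algebra.
From mathcomp Require Import polyrcf ring lra zify.
Import Order.TTheory GRing.Theory Num.Theory.
Local Open Scope ring_scope.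

Lemma eig_bound (R : realFieldType) N (M : 'M[R]_N) (w : 'I_N -> R) mu :
 (forall i j, 0 <= M i j) -> (forall i, 0 < w i) ->
 (forall j, \sum_i w i * M i j <= mu * w j) ->
 forall a, root (char_poly M) a -> a <= mu.
Proof.
move=> M0 w0 Hc a; rewrite -eigenvalue_root_char => /eigenvalueP [v vM v0].
have [i0 [k0 Hk0]] : exists i : 'I_N, exists k : 'I_1, v k i != 0.
  by move/matrix0Pn: v0 => [k [i H]]; exists i, k.
have k00 : k0 = 0 by apply: ord_inj; case: k0 {Hk0} => [[]].
subst k0.
pose f j := `|v 0 j| / w j.
case: (@arg_maxP _ _ _ i0 xpredT f isT) => j _ Hj.
have Hi : forall i, `|v 0 i| <= f j * w i.
  by move=> i; rewrite -ler_pdivrMr //; exact: (Hj i isT).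
have fjpos : 0 < f j.
  apply: lt_le_trans (Hj i0 isT); rewrite /f divr_gt0 //.
  by rewrite normr_gt0.
have vjpos : 0 < `|v 0 j|.
  by move: fjpos; rewrite /f pmulr_lgt0 // invr_gt0.
have E : \sum_i v 0 i * M i j = a * v 0 j.
  by have := congr1 (fun m : 'rV_N => m 0 j) vM; rewrite !mxE.
have : `|a| * `|v 0 j| <= mu * `|v 0 j|.
  rewrite -normrM -E.
  apply: le_trans (ler_norm_sum _ _ _) _.
  apply: (@le_trans _ _ (\sum_i f j * w i * M i j)).
    apply: ler_sum => i _; rewrite normrM (ger0_norm (M0 i j)).
    by apply: ler_wpM2r.
  rewrite -(divfK (negbT (gt_eqF (w0 j))) `|v 0 j|) -/(f j).
  under eq_bigr do rewrite -mulrA.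
  rewrite -mulr_sumr mulrCA; apply: ler_wpM2l; first exact: ltW.
  exact: Hc.
rewrite ler_pM2r // => H; exact: le_trans (ler_norm a) H.
Qed.

Lemma slE (R : nzRingType) (T : finType) (e : rel T) i j :
  signless_laplacian R e i j =
  (\sum_z (e (enum_val i) z)%:R) *+ (i == j) + (e (enum_val i) (enum_val j))%:R.
Proof.
rewrite /signless_laplacian /degmx /adjmx.
rewrite (mxE _ _ i j) /= (mxE _ _ i j) (mxE _ _ 0 i) (mxE _ _ i j).
congr (_ *+ _ + _).
rewrite (big_enum_val (fun z => (e (enum_val i) z)%:R)).
by apply: eq_bigr => k _; rewrite (mxE _ _ i k).
Qed.

Lemma q_bound (R : rcfType) (T : finType) (e : rel T) (W : T -> R) mu :
 (forall x, 0 < W x) -> 0 <= mu ->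
 (forall y, W y * \sum_z (e y z)%:R + \sum_x W x * (e x y)%:R <= mu * W y) ->
 q_index R e <= mu.
Proof.
move=> W0 mu0 HW; rewrite /q_index.
have := mem_last 0 (rootsR (char_poly (signless_laplacian R e))).
rewrite inE => /orP [/eqP -> //|].
have nz : char_poly (signless_laplacian R e) != 0.
  exact: monic_neq0 (char_poly_monic _).
rewrite -(roots_on_rootsR nz) => /andP [_ rt].
apply: (@eig_bound _ _ _ (fun i => W (enum_val i))) rt.
- move=> i j; rewrite slE.
  apply: addr_ge0; last exact: ler0n.
  apply: mulrn_wge0; apply: sumr_ge0 => k _; exact: ler0n.
- by move=> i.
- move=> j.
  under eq_bigr do rewrite slE mulrDr.
  rewrite big_split /= [X in X + _](bigD1 j) //= [X in _ + X + _]big1 ?addr0; last first.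
    by move=> i ij; rewrite (negbTE ij) mulr0n mulr0.
  rewrite eqxx mulr1n.
  rewrite -(big_enum_val (fun x => W x * (e x (enum_val j))%:R)).
  exact: HW.
Qed.

Lemma sum_unit (R : nzRingType) (F : unit -> R) : \sum_(i : unit) F i = F tt.
Proof. by rewrite (big_pred1 tt) // => [[]]. Qed.

Lemma sum_clique (R : nzRingType) r s (a : 'I_r) (b : 'I_s) :
  \sum_(q : 'I_r * 'I_s) (((q.1 == a) && (q.2 != b))%:R : R) = (s - 1)%:R.
Proof.
rewrite (eq_bigr (fun q => ((q.1 == a) && (q.2 != b))%:R)) //.
rewrite -(pair_bigA _ (fun i j => (((i == a) && (j != b))%:R : R))) /=.
rewrite (bigD1 a) //= [X in _ + X]big1 ?addr0; last first.
  by move=> i ia; apply: big1 => j _; rewrite (negbTE ia).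
rewrite eqxx /= (bigD1 b) // eqxx /= add0r.
rewrite (@eq_bigr _ _ _ _ _ (fun i => i != b) _ (fun _ => 1)); last by move=> i H; rewrite H /= mulr1n.
have -> : \sum_(i | i != b) (1:R) = \sum_(i in predC1 b) 1 by [].
by rewrite sumr_const cardC1 card_ord subn1.
Qed.

Lemma sum_all (R : nzRingType) r s :
  \sum_(q : 'I_r * 'I_s) (1 : R) = (r * s)%:R.
Proof. by rewrite sumr_const card_prod !card_ord. Qed.

Theorem lemma2p6 (R : rcfType) (r t : nat) :
  (1 <= r)%N -> (3 <= t)%N ->
  let n := (r * (t - 1) + 2)%N in
  q_index R (gjoin K1 (L_graph r (t - 1))) < (n + 2 * t - 3)%:R.
Proof.
move=> hr ht; cbv zeta; rewrite /L_graph.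
case: t ht => [|s] // ht.
rewrite subSS subn0.
have hs : (2 <= s)%N by [].
have hsR : 2 <= s%:R :> R by rewrite (ler_nat R 2 s).
have hrR : 1 <= r%:R :> R by rewrite (ler_nat R 1 r).
pose W (x : unit + (unit + 'I_r * 'I_s)) : R :=
  match x with inr (inr _) => 2 | _ => (r * s)%:R end.
apply: (@le_lt_trans _ _ ((r * s + 2 * s)%:R)); last first.
  rewrite ltr_nat; lia.
apply: (@q_bound _ _ _ W).
- case=> [_|[_|_]] /=; rewrite ?ltr0n ?muln_gt0 //.
  by rewrite (leq_trans _ hr) //= (leq_trans _ hs).
  by rewrite (leq_trans _ hr) //= (leq_trans _ hs).
- exact: ler0n.
case=> [[]|[[]|[a b]]].
- rewrite !big_sumType /= !sum_unit /= !mulr1 sum_all sumr_const card_prod !card_ord.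
  rewrite (_ : 2 *+ (r*s) = 2 * (r*s)%:R :> R); last by rewrite mulr_natr.
  rewrite natrD !natrM.
  have X0 : 0 <= r%:R * s%:R :> R by apply: mulr_ge0; apply: ler0n.
  move: X0; set X := r%:R * s%:R; move=> X0.
  nra.
- rewrite !big_sumType /= !sum_unit /= !mulr1 sum_all sumr_const card_prod !card_ord.
  rewrite (_ : 2 *+ (r*s) = 2 * (r*s)%:R :> R); last by rewrite mulr_natr.
  rewrite natrD !natrM.
  have X0 : 0 <= r%:R * s%:R :> R by apply: mulr_ge0; apply: ler0n.
  move: X0; set X := r%:R * s%:R; move=> X0.
  nra.
- rewrite !big_sumType /= !sum_unit /= !mulr1.
  rewrite (eq_bigr (fun q : 'I_r * 'I_s => ((q.1 == a) && (q.2 != b))%:R)); last first.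
    by case=> i j _; rewrite /rK /= eq_sym [j == b]eq_sym.
  rewrite -mulr_sumr.
  rewrite (eq_bigr (fun q : 'I_r * 'I_s => ((q.1 == a) && (q.2 != b))%:R)); last first.
    by case=> i j _.
  rewrite sum_clique natrD !natrM natrB; last by apply: leq_trans hs.
  nra.
Qed.
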